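(* Let $\mathcal{A}\subseteq M_n(\mathbb{C})$ be a logmodular subalgebra. Then for every positive semidefinite matrix $b\in M_n(\mathbb{C})$ there exist $a,c\in\mathcal{A}$ such that $b=a^*a=cc^*$.
   Context: A unital subalgebra $\mathcal{A}\subseteq M_n(\mathbb{C})$ (containing the identity $1_n$) is called logmodular (in $M_n(\mathbb{C})$) if the set $\{a^*a : a\in\mathcal{A}^{-1}\}$ is dense in the set of positive invertible matrices in $M_n(\mathbb{C})$, where $\mathcal{A}^{-1}$ denotes the set of elements of $\mathcal{A}$ invertible in $\mathcal{A}$. *)

(* Defs.v *)
(* Complex numbers are built as pairs of
   Stdlib reals; n x n complex matrices are represented as functions
   nat -> nat -> C whose entries vanish outside the index range [0,n)x[0,n)
   (predicate [wf n]).  All matrix operations below preserve [wf n]. *)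
From Stdlib Require Import Reals Arith Bool.
Open Scope R_scope.

Record C : Type := mkC { re : R ; im : R }.

Definition C0 : C := mkC 0 0.
Definition C1 : C := mkC 1 0.
Definition Cadd (x y : C) : C := mkC (re x + re y) (im x + im y).
Definition Copp (x : C) : C := mkC (- re x) (- im x).
Definition Cmul (x y : C) : C :=
  mkC (re x * re y - im x * im y) (re x * im y + im x * re y).
Definition Cconj (x : C) : C := mkC (re x) (- im x).
Definition Cnorm2 (x : C) : R := re x * re x + im x * im x.

Fixpoint Csum (k : nat) (f : nat -> C) : C :=
  match k with
  | O => C0
  | S k' => Cadd (Csum k' f) (f k')
  end.

Fixpoint Rsum (k : nat) (f : nat -> R) : R :=
  match k with
  | O => 0
  | S k' => Rsum k' f + f k'
  end.

Definition Mat : Type := nat -> nat -> C.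

Definition wf (n : nat) (A : Mat) : Prop :=
  forall i j : nat, (n <= i \/ n <= j)%nat -> A i j = C0.

Definition mid (n : nat) : Mat :=
  fun i j => if andb (andb (i <? n) (j <? n)) (i =? j) then C1 else C0.
Definition madd (A B : Mat) : Mat := fun i j => Cadd (A i j) (B i j).
Definition msub (A B : Mat) : Mat := fun i j => Cadd (A i j) (Copp (B i j)).
Definition mscal (z : C) (A : Mat) : Mat := fun i j => Cmul z (A i j).
Definition mmul (n : nat) (A B : Mat) : Mat :=
  fun i j => if andb (i <? n) (j <? n)
             then Csum n (fun k => Cmul (A i k) (B k j)) else C0.
Definition adj (A : Mat) : Mat := fun i j => Cconj (A j i).

(* squared Frobenius (Hilbert-Schmidt) norm; defines the usual topology on M_n(C) *)
Definition frob2 (n : nat) (A : Mat) : R :=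
  Rsum n (fun i => Rsum n (fun j => Cnorm2 (A i j))).

Definition psd (n : nat) (b : Mat) : Prop :=
  wf n b /\ adj b = b /\
  forall v : nat -> C,
    0 <= re (Csum n (fun i => Csum n (fun j =>
                Cmul (Cconj (v i)) (Cmul (b i j) (v j))))).

(* invertibility inside a set S of matrices (S = M_n(C) gives usual invertibility) *)
Definition invertible_in (n : nat) (S : Mat -> Prop) (a : Mat) : Prop :=
  S a /\ exists a' : Mat, S a' /\ mmul n a a' = mid n /\ mmul n a' a = mid n.

Definition positive_invertible (n : nat) (p : Mat) : Prop :=
  psd n p /\ invertible_in n (wf n) p.

Definition unital_subalgebra (n : nat) (S : Mat -> Prop) : Prop :=
  (forall a, S a -> wf n a) /\
  S (mid n) /\
  (forall a b, S a -> S b -> S (madd a b)) /\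
  (forall (z : C) a, S a -> S (mscal z a)) /\
  (forall a b, S a -> S b -> S (mmul n a b)).

Definition logmodular (n : nat) (S : Mat -> Prop) : Prop :=
  forall p : Mat, positive_invertible n p ->
  forall eps : R, 0 < eps ->
  exists a : Mat, invertible_in n S a /\
    frob2 n (msub (mmul n (adj a) a) p) < eps.

(* Main.v *)
Require Import Defs.
From Stdlib Require Import Reals Arith.
Open Scope R_scope.
From Stdlib Require Import Lra Lia FunctionalExtensionality ClassicalEpsilon List.
Import Defs.

Module LinAlg.
From HB Require Import structures.
From mathcomp Require Import all_boot all_algebra.
Import GRing.Theory.
Local Open Scope R_scope.

Lemma Ceq (x y : Defs.C) : re x = re y -> im x = im y -> x = y.
Proof. destruct x, y; simpl; intros; subst; reflexivity. Qed.

Definition Ceqb (x y : Defs.C) : bool :=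
  if Req_EM_T (re x) (re y) then (if Req_EM_T (im x) (im y) then true else false) else false.
Lemma CeqP : Equality.axiom Ceqb.
Proof.
  intros x y; unfold Ceqb.
  destruct (Req_EM_T (re x) (re y)); destruct (Req_EM_T (im x) (im y)); constructor.
  - apply Ceq; auto.
  all: intros ->; auto.
Qed.
HB.instance Definition _ := hasDecEq.Build Defs.C CeqP.

Definition Cfind (P : pred Defs.C) (n : nat) : option Defs.C :=
  match excluded_middle_informative (exists x, P x) with
  | left H => Some (proj1_sig (constructive_indefinite_description _ H))
  | right _ => None end.
Lemma Cfind_correct P n x : Cfind P n = Some x -> P x.
Proof. unfold Cfind; destruct excluded_middle_informative as [H|H]; [|discriminate].
  intros E; injection E; intros <-. exact (proj2_sig (constructive_indefinite_description _ H)). Qed.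
Lemma Cfind_complete (P : pred Defs.C) : (exists x, P x) -> exists n, Cfind P n.
Proof. intros H; exists 0%nat; unfold Cfind; destruct excluded_middle_informative; [reflexivity|contradiction]. Qed.
Lemma Cfind_ext (P Q : pred Defs.C) : P =1 Q -> Cfind P =1 Cfind Q.
Proof. intros H; assert (P = Q) by (apply functional_extensionality; exact H); subst; intros n; reflexivity. Qed.
HB.instance Definition _ := hasChoice.Build Defs.C Cfind_correct Cfind_complete Cfind_ext.

Lemma CaddA : associative Cadd. Proof. intros x y z; apply Ceq; simpl; ring. Qed.
Lemma CaddC : commutative Cadd. Proof. intros x y; apply Ceq; simpl; ring. Qed.
Lemma Cadd0 : left_id Defs.C0 Cadd. Proof. intros x; apply Ceq; simpl; ring. Qed.
Lemma CaddN : left_inverse Defs.C0 Copp Cadd. Proof. intros x; apply Ceq; simpl; ring. Qed.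
HB.instance Definition _ := GRing.isZmodule.Build Defs.C CaddA CaddC Cadd0 CaddN.
Lemma CmulA : associative Cmul. Proof. intros x y z; apply Ceq; simpl; ring. Qed.
Lemma CmulC : commutative Cmul. Proof. intros x y; apply Ceq; simpl; ring. Qed.
Lemma Cmul1 : left_id Defs.C1 Cmul. Proof. intros x; apply Ceq; simpl; ring. Qed.
Lemma CmulD : left_distributive Cmul Cadd. Proof. intros x y z; apply Ceq; simpl; ring. Qed.
Lemma C1n0 : Defs.C1 != Defs.C0. Proof. apply/negP => /eqP H. injection H. lra. Qed.
HB.instance Definition _ := GRing.Zmodule_isComNzRing.Build Defs.C CmulA CmulC Cmul1 CmulD C1n0.
Definition Cinv (x : Defs.C) : Defs.C := mkC (re x / Cnorm2 x) (- im x / Cnorm2 x).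
Lemma CmulV (x : Defs.C) : x != 0%R -> Cmul (Cinv x) x = Defs.C1.
Proof. move=> /eqP Hx. have Hn : Cnorm2 x <> 0.
  { unfold Cnorm2; intro H; apply Hx; apply Ceq; simpl; nra. }
  apply Ceq; simpl; unfold Cnorm2 in *; field; auto. Qed.
Lemma Cinv0 : Cinv 0%R = 0%R.
Proof. apply Ceq; simpl; unfold Cnorm2; simpl; unfold Rdiv; rewrite ?Rmult_0_l ?Ropp_0 ?Rmult_0_l; reflexivity. Qed.
HB.instance Definition _ := GRing.ComNzRing_isField.Build Defs.C CmulV Cinv0.

Local Open Scope ring_scope.

Lemma Csum_big n (f : nat -> Defs.C) : Csum n f = (\sum_(k < n) f k)%R.
Proof.
  elim: n => [|n IH]; first by rewrite big_ord0.
  by rewrite big_ord_recr /= IH.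
Qed.

Definition getm n (X : 'M[Defs.C]_n) (k l : nat) : Defs.C :=
  match @insub nat (fun k => (k < n)%N) 'I_n k, @insub nat (fun k => (k < n)%N) 'I_n l with
  | Some i, Some j => X i j | _, _ => Defs.C0 end.

Lemma getm_ord n (X : 'M[Defs.C]_n) (i j : 'I_n) : getm n X i j = X i j.
Proof. rewrite /getm !valK. done. Qed.

Lemma ltb_ssr i n : Nat.ltb i n = (i < n)%N.
Proof. apply/idP/idP => H. apply/ltP; apply Nat.ltb_lt; exact H. apply Nat.ltb_lt; apply/ltP; exact H. Qed.
Lemma eqb_ssr i j : Nat.eqb i j = (i == j).
Proof. apply/idP/idP => H. apply/eqP; apply Nat.eqb_eq; exact H. apply Nat.eqb_eq; apply/eqP; exact H. Qed.

Lemma getm_out n X k l : (n <= k)%N || (n <= l)%N -> getm n X k l = Defs.C0.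
Proof.
  rewrite /getm. case/orP => H.
  - by rewrite insubF // ltnNge H.
  - case: insubP => // i _ _. by rewrite insubF // ltnNge H.
Qed.

Lemma inj_invertible n (A : Mat) : wf n A ->
 (forall v : nat -> Defs.C, (forall i, (i < n)%N -> Csum n (fun j => Cmul (A i j) (v j)) = Defs.C0) -> forall i, (i<n)%N -> v i = Defs.C0) ->
 exists B, wf n B /\ mmul n A B = mid n /\ mmul n B A = mid n.
Proof.
  move=> wfA Hinj.
  pose M := (\matrix_(i < n, j < n) A i j) : 'M[Defs.C]_n.
  have HM : M \in unitmx.
  { rewrite -unitmx_tr -row_free_unit. apply: inj_row_free => v Hv.
    pose vf := fun k => match @insub nat (fun k => (k < n)%N) 'I_n k with Some j => v 0 j | None => Defs.C0 end.
    have Hvf : forall j : 'I_n, vf j = v 0 j by move=> j; rewrite /vf valK.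
    apply/rowP => j. rewrite mxE -Hvf. apply: (Hinj vf) => //.
    move=> i Hi. rewrite Csum_big.
    have E := congr1 (fun w : 'rV_n => w 0 (Ordinal Hi)) Hv. rewrite /= !mxE in E.
    rewrite -[RHS]E. apply: eq_bigr => k _. rewrite !mxE Hvf /=. apply: CmulC. }
  exists (getm n (invmx M)). split; [|split].
  - move=> i j H. apply: getm_out. case: H => /leP -> //. by rewrite orbT.
  - apply: functional_extensionality => i; apply: functional_extensionality => j.
    rewrite /mmul /mid !ltb_ssr.
    case: (ltnP i n) => Hi; case: (ltnP j n) => Hj //=.
    rewrite Csum_big.
    have := congr1 (fun w : 'M_n => w (Ordinal Hi) (Ordinal Hj)) (mulmxV HM).
    rewrite /= !mxE eqb_ssr => E.
    rewrite (_ : (if i == j then Defs.C1 else C0) = (Ordinal Hi == Ordinal Hj)%:R); last by have -> : (Ordinal Hi == Ordinal Hj) = (i == j) by []; case: (i == j).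
    rewrite -E. apply: eq_bigr => k _. rewrite mxE.
    by rewrite -[j]/(nat_of_ord (Ordinal Hj)) getm_ord.
  - apply: functional_extensionality => i; apply: functional_extensionality => j.
    rewrite /mmul /mid !ltb_ssr.
    case: (ltnP i n) => Hi; case: (ltnP j n) => Hj //=.
    rewrite Csum_big.
    have := congr1 (fun w : 'M_n => w (Ordinal Hi) (Ordinal Hj)) (mulVmx HM).
    rewrite /= !mxE eqb_ssr => E.
    rewrite (_ : (if i == j then Defs.C1 else C0) = (Ordinal Hi == Ordinal Hj)%:R); last by have -> : (Ordinal Hi == Ordinal Hj) = (i == j) by []; case: (i == j).
    rewrite -E. apply: eq_bigr => k _. rewrite mxE.
    by rewrite -[i]/(nat_of_ord (Ordinal Hi)) getm_ord.
Qed.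

Lemma inj_invertible' n (A : Mat) : wf n A ->
 (forall v : nat -> Defs.C, (forall i, (i < n)%coq_nat -> Csum n (fun j => Cmul (A i j) (v j)) = Defs.C0) ->
    forall i, (i < n)%coq_nat -> v i = Defs.C0) ->
 exists B, wf n B /\ mmul n A B = mid n /\ mmul n B A = mid n.
Proof.
  move=> wA H. apply: inj_invertible => // v Hv i /ltP Hi. apply: H => // k Hk. apply: Hv. by apply/ltP.
Qed.

End LinAlg.

Import Defs.
Open Scope R_scope.

Lemma Ceq (x y : C) : re x = re y -> im x = im y -> x = y.
Proof. destruct x, y; simpl; intros; subst; reflexivity. Qed.
Ltac Cring := apply Ceq; simpl; ring.

Lemma Csum_ext n f g : (forall k, (k < n)%nat -> f k = g k) -> Csum n f = Csum n g.
Proof. induction n; intros H; simpl; auto. rewrite IHn by (intros; apply H; lia). rewrite H by lia; auto. Qed.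
Lemma Csum_add n f g : Csum n (fun k => Cadd (f k) (g k)) = Cadd (Csum n f) (Csum n g).
Proof. induction n; simpl. Cring. rewrite IHn. Cring. Qed.
Lemma Csum_mul_l n c f : Cmul c (Csum n f) = Csum n (fun k => Cmul c (f k)).
Proof. induction n; simpl. Cring. rewrite <- IHn. Cring. Qed.
Lemma Csum_mul_r n c f : Cmul (Csum n f) c = Csum n (fun k => Cmul (f k) c).
Proof. induction n; simpl. Cring. rewrite <- IHn. Cring. Qed.
Lemma Csum_conj n f : Cconj (Csum n f) = Csum n (fun k => Cconj (f k)).
Proof. induction n; simpl. Cring. rewrite <- IHn. Cring. Qed.
Lemma Csum_opp n f : Copp (Csum n f) = Csum n (fun k => Copp (f k)).
Proof. induction n; simpl. Cring. rewrite <- IHn. Cring. Qed.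
Lemma Csum_zero n f : (forall k, (k < n)%nat -> f k = C0) -> Csum n f = C0.
Proof. induction n; intros H; simpl; auto. rewrite IHn by (intros; apply H; lia). rewrite H by lia. Cring. Qed.
Lemma Csum_swap n m (f : nat -> nat -> C) :
  Csum n (fun i => Csum m (fun j => f i j)) = Csum m (fun j => Csum n (fun i => f i j)).
Proof.
  induction n; simpl. symmetry; apply Csum_zero; auto.
  rewrite IHn. rewrite <- Csum_add. reflexivity.
Qed.
Lemma Csum_single n i f : (i < n)%nat -> (forall k, (k < n)%nat -> k <> i -> f k = C0) -> Csum n f = f i.
Proof.
  induction n; intros Hi H; [lia|]. simpl.
  destruct (Nat.eq_dec i n) as [->|Hne].
  - rewrite Csum_zero. Cring. intros k Hk; apply H; lia.
  - rewrite IHn by (try lia; intros; apply H; lia). rewrite (H n) by lia. Cring.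
Qed.
Lemma re_Csum n f : re (Csum n f) = Rsum n (fun k => re (f k)).
Proof. induction n; simpl; auto. rewrite IHn; auto. Qed.
Lemma im_Csum n f : im (Csum n f) = Rsum n (fun k => im (f k)).
Proof. induction n; simpl; auto. rewrite IHn; auto. Qed.

Lemma Rsum_ext n f g : (forall k, (k < n)%nat -> f k = g k) -> Rsum n f = Rsum n g.
Proof. induction n; intros H; simpl; auto. rewrite IHn by (intros; apply H; lia). rewrite H by lia; auto. Qed.
Lemma Rsum_le n f g : (forall k, (k < n)%nat -> f k <= g k) -> Rsum n f <= Rsum n g.
Proof. induction n; intros H; simpl. lra. assert (f n <= g n) by (apply H; lia).
  assert (Rsum n f <= Rsum n g) by (apply IHn; intros; apply H; lia). lra. Qed.
Lemma Rsum_nonneg n f : (forall k, (k < n)%nat -> 0 <= f k) -> 0 <= Rsum n f.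
Proof. intros H. replace 0 with (Rsum n (fun _ => 0)). apply Rsum_le; auto.
  clear H; induction n; simpl; auto; rewrite IHn; ring. Qed.
Lemma Rsum_term n f i : (forall k, (k < n)%nat -> 0 <= f k) -> (i < n)%nat -> f i <= Rsum n f.
Proof.
  induction n; intros H Hi; [lia|]. simpl.
  destruct (Nat.eq_dec i n) as [->|Hne].
  - assert (0 <= Rsum n f) by (apply Rsum_nonneg; intros; apply H; lia). lra.
  - assert (f i <= Rsum n f) by (apply IHn; [intros; apply H; lia | lia]).
    assert (0 <= f n) by (apply H; lia). lra.
Qed.
Lemma Rsum_mul_l n c f : c * Rsum n f = Rsum n (fun k => c * f k).
Proof. induction n; simpl. ring. rewrite <- IHn. ring. Qed.
Lemma Rsum_add n f g : Rsum n (fun k => f k + g k) = Rsum n f + Rsum n g.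
Proof. induction n; simpl. ring. rewrite IHn. ring. Qed.
Lemma Rsum_const n c : Rsum n (fun _ => c) = INR n * c.
Proof. induction n. simpl; ring. rewrite S_INR. simpl Rsum. rewrite IHn. ring. Qed.
Lemma Rsum_swap n m (f : nat -> nat -> R) :
  Rsum n (fun i => Rsum m (fun j => f i j)) = Rsum m (fun j => Rsum n (fun i => f i j)).
Proof.
  induction n; simpl. symmetry. transitivity (Rsum m (fun _ => 0)). apply Rsum_ext; auto.
  rewrite Rsum_const; ring.
  rewrite IHn. rewrite <- Rsum_add. reflexivity.
Qed.


Ltac mext := apply functional_extensionality; intro; apply functional_extensionality; intro.

Lemma ltb_true i n : (i < n)%nat -> (i <? n) = true.
Proof. apply Nat.ltb_lt. Qed.
Lemma ltb_false i n : (n <= i)%nat -> (i <? n) = false.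
Proof. apply Nat.ltb_ge. Qed.

Lemma mmul_in n A B i j : (i < n)%nat -> (j < n)%nat ->
  mmul n A B i j = Csum n (fun k => Cmul (A i k) (B k j)).
Proof. intros Hi Hj; unfold mmul; rewrite !ltb_true; auto. Qed.
Lemma mmul_out n A B i j : (n <= i \/ n <= j)%nat -> mmul n A B i j = C0.
Proof. intros [H|H]; unfold mmul; [rewrite (ltb_false i n H) | rewrite (ltb_false j n H), Bool.andb_false_r]; auto. Qed.

Lemma wf_mmul n A B : wf n (mmul n A B).
Proof. intros i j H; apply mmul_out; auto. Qed.
Lemma wf_adj n A : wf n A -> wf n (adj A).
Proof. intros H i j Hij; unfold adj; rewrite H by tauto; Cring. Qed.
Lemma wf_madd n A B : wf n A -> wf n B -> wf n (madd A B).
Proof. intros HA HB i j H; unfold madd; rewrite HA, HB by auto; Cring. Qed.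
Lemma wf_msub n A B : wf n A -> wf n B -> wf n (msub A B).
Proof. intros HA HB i j H; unfold msub; rewrite HA, HB by auto; Cring. Qed.
Lemma wf_mscal n z A : wf n A -> wf n (mscal z A).
Proof. intros HA i j H; unfold mscal; rewrite HA by auto; Cring. Qed.
Lemma wf_mid n : wf n (mid n).
Proof. intros i j [H|H]; unfold mid; [rewrite (ltb_false i n H) | rewrite (ltb_false j n H)]; simpl; auto.
  rewrite Bool.andb_false_r; auto. Qed.

Lemma mid_in n i j : (i < n)%nat -> (j < n)%nat -> mid n i j = if Nat.eqb i j then C1 else C0.
Proof. intros; unfold mid; rewrite !ltb_true; auto. Qed.

Lemma mmul_mid_r n A : wf n A -> mmul n A (mid n) = A.
Proof.
  intros HA; mext. rename x into i, x0 into j.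
  destruct (Nat.lt_ge_cases i n); [destruct (Nat.lt_ge_cases j n)|].
  - rewrite mmul_in by auto. rewrite (Csum_single n j) by (auto; intros k Hk Hkj; rewrite mid_in by auto;
      rewrite (proj2 (Nat.eqb_neq k j) Hkj); Cring).
    rewrite mid_in, Nat.eqb_refl by auto. Cring.
  - rewrite mmul_out, HA by auto; auto.
  - rewrite mmul_out, HA by auto; auto.
Qed.
Lemma mmul_mid_l n A : wf n A -> mmul n (mid n) A = A.
Proof.
  intros HA; mext. rename x into i, x0 into j.
  destruct (Nat.lt_ge_cases i n); [destruct (Nat.lt_ge_cases j n)|].
  - rewrite mmul_in by auto. rewrite (Csum_single n i) by (auto; intros k Hk Hkj; rewrite mid_in by auto;
      rewrite (proj2 (Nat.eqb_neq i k) (not_eq_sym Hkj)); Cring).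
    rewrite mid_in, Nat.eqb_refl by auto. Cring.
  - rewrite mmul_out, HA by auto; auto.
  - rewrite mmul_out, HA by auto; auto.
Qed.

Lemma mmul_assoc n A B D : mmul n (mmul n A B) D = mmul n A (mmul n B D).
Proof.
  mext. rename x into i, x0 into j.
  destruct (Nat.lt_ge_cases i n); [destruct (Nat.lt_ge_cases j n)|].
  - rewrite !mmul_in by auto.
    transitivity (Csum n (fun k => Csum n (fun l => Cmul (A i l) (Cmul (B l k) (D k j))))).
    + apply Csum_ext; intros k Hk. rewrite mmul_in by auto. rewrite Csum_mul_r. apply Csum_ext; intros; Cring.
    + rewrite Csum_swap. apply Csum_ext; intros l Hl. rewrite mmul_in by auto. rewrite Csum_mul_l. auto.
  - rewrite !mmul_out by auto; auto.
  - rewrite !mmul_out by auto; auto.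
Qed.

Lemma adj_mmul n A B : adj (mmul n A B) = mmul n (adj B) (adj A).
Proof.
  mext. rename x into i, x0 into j. unfold adj at 1.
  destruct (Nat.lt_ge_cases i n); [destruct (Nat.lt_ge_cases j n)|].
  - rewrite !mmul_in by auto. rewrite Csum_conj. apply Csum_ext; intros; unfold adj; Cring.
  - rewrite !mmul_out by auto; Cring.
  - rewrite !mmul_out by auto; Cring.
Qed.
Lemma adj_adj A : adj (adj A) = A.
Proof. mext. unfold adj. Cring. Qed.
Lemma adj_mid n : adj (mid n) = mid n.
Proof. mext. rename x into i, x0 into j. unfold adj, mid.
  rewrite (Nat.eqb_sym j i), (Bool.andb_comm (j <? n)). destruct (andb (andb _ _) _); Cring. Qed.
Lemma adj_madd A B : adj (madd A B) = madd (adj A) (adj B).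
Proof. mext. unfold adj, madd. Cring. Qed.
Lemma adj_mscal_r r A : adj (mscal (mkC r 0) A) = mscal (mkC r 0) (adj A).
Proof. mext. unfold adj, mscal. Cring. Qed.
Lemma mmul_madd_r n A B D : mmul n A (madd B D) = madd (mmul n A B) (mmul n A D).
Proof.
  mext. rename x into i, x0 into j. unfold madd at 2.
  destruct (Nat.lt_ge_cases i n); [destruct (Nat.lt_ge_cases j n)|].
  - rewrite !mmul_in by auto. rewrite <- Csum_add. apply Csum_ext; intros; unfold madd; Cring.
  - rewrite !mmul_out by auto; Cring.
  - rewrite !mmul_out by auto; Cring.
Qed.
Lemma mmul_madd_l n A B D : mmul n (madd A B) D = madd (mmul n A D) (mmul n B D).
Proof.
  mext. rename x into i, x0 into j. unfold madd at 2.
  destruct (Nat.lt_ge_cases i n); [destruct (Nat.lt_ge_cases j n)|].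
  - rewrite !mmul_in by auto. rewrite <- Csum_add. apply Csum_ext; intros; unfold madd; Cring.
  - rewrite !mmul_out by auto; Cring.
  - rewrite !mmul_out by auto; Cring.
Qed.


Definition mv n (A : Mat) (v : nat -> C) (i : nat) := Csum n (fun j => Cmul (A i j) (v j)).
Definition qf n (A : Mat) (v : nat -> C) :=
  Csum n (fun i => Csum n (fun j => Cmul (Cconj (v i)) (Cmul (A i j) (v j)))).

Lemma qf_mv n A v : qf n A v = Csum n (fun i => Cmul (Cconj (v i)) (mv n A v i)).
Proof. unfold qf, mv. apply Csum_ext; intros. rewrite Csum_mul_l. auto. Qed.

Lemma re_norm_sum n v : re (Csum n (fun i => Cmul (Cconj (v i)) (v i))) = Rsum n (fun i => Cnorm2 (v i)).
Proof. rewrite re_Csum. apply Rsum_ext; intros. unfold Cnorm2; simpl; ring. Qed.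

Definition shift n (b : Mat) (e : R) := madd b (mscal (mkC e 0) (mid n)).

Lemma qf_shift n b e v : qf n (shift n b e) v =
  Cadd (qf n b v) (Cmul (mkC e 0) (Csum n (fun i => Cmul (Cconj (v i)) (v i)))).
Proof.
  unfold qf, shift, madd, mscal. rewrite Csum_mul_l, <- Csum_add. apply Csum_ext; intros i Hi.
  transitivity (Csum n (fun j => Cadd (Cmul (Cconj (v i)) (Cmul (b i j) (v j)))
     (Cmul (Cconj (v i)) (Cmul (Cmul (mkC e 0) (mid n i j)) (v j))))).
  apply Csum_ext; intros; Cring.
  rewrite Csum_add. f_equal.
  rewrite (Csum_single n i) by (auto; intros k Hk Hki; rewrite mid_in by auto;
      rewrite (proj2 (Nat.eqb_neq i k) (not_eq_sym Hki)); Cring).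
  rewrite mid_in, Nat.eqb_refl by auto. Cring.
Qed.

Lemma wf_shift n b e : wf n b -> wf n (shift n b e).
Proof. intros; apply wf_madd; auto; apply wf_mscal, wf_mid. Qed.

Lemma psd_shift n b e : psd n b -> 0 <= e -> psd n (shift n b e).
Proof.
  intros (Hw & Hh & Hq) He. split; [apply wf_shift; auto|split].
  - unfold shift. rewrite adj_madd, adj_mscal_r, adj_mid, Hh. auto.
  - intros v. fold (qf n (shift n b e) v). rewrite qf_shift. simpl.
    rewrite Rmult_0_l, Rminus_0_r. rewrite re_norm_sum. specialize (Hq v). fold (qf n b v) in Hq.
    assert (0 <= Rsum n (fun i => Cnorm2 (v i))) by (apply Rsum_nonneg; intros; unfold Cnorm2; nra).
    nra.
Qed.

Lemma shift_inj n b e : psd n b -> 0 < e -> forall v,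
  (forall i, (i < n)%nat -> mv n (shift n b e) v i = C0) -> forall i, (i < n)%nat -> v i = C0.
Proof.
  intros (Hw & Hh & Hq) He v Hv i Hi.
  assert (H0 : qf n (shift n b e) v = C0).
  { rewrite qf_mv. apply Csum_zero. intros k Hk. rewrite Hv by auto. Cring. }
  rewrite qf_shift in H0. apply (f_equal re) in H0. simpl in H0.
  rewrite Rmult_0_l, Rminus_0_r, re_norm_sum in H0. specialize (Hq v). fold (qf n b v) in Hq.
  assert (Hs : forall k, (k < n)%nat -> 0 <= Cnorm2 (v k)) by (intros; unfold Cnorm2; nra).
  assert (0 <= Rsum n (fun i => Cnorm2 (v i))) by (apply Rsum_nonneg; auto).
  assert (Rsum n (fun i => Cnorm2 (v i)) = 0) by nra.
  assert (Cnorm2 (v i) <= 0) by (rewrite <- H1; apply (Rsum_term n (fun i => Cnorm2 (v i))); auto).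
  unfold Cnorm2 in *. apply Ceq; simpl; nra.
Qed.

Lemma mv_mmul n A B v i : (i < n)%nat -> mv n (mmul n A B) v i = mv n A (mv n B v) i.
Proof.
  intros Hi. unfold mv.
  transitivity (Csum n (fun j => Csum n (fun k => Cmul (A i k) (Cmul (B k j) (v j))))).
  - apply Csum_ext; intros j Hj. rewrite mmul_in by auto. rewrite Csum_mul_r. apply Csum_ext; intros; Cring.
  - rewrite Csum_swap. apply Csum_ext; intros. rewrite Csum_mul_l. auto.
Qed.
Lemma mv_mid n v i : (i < n)%nat -> mv n (mid n) v i = v i.
Proof.
  intros Hi. unfold mv. rewrite (Csum_single n i) by (auto; intros k Hk Hki; rewrite mid_in by auto;
      rewrite (proj2 (Nat.eqb_neq i k) (not_eq_sym Hki)); Cring).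
  rewrite mid_in, Nat.eqb_refl by auto. Cring.
Qed.

Lemma inverse_psd n p q : psd n p -> wf n q -> mmul n p q = mid n -> mmul n q p = mid n -> psd n q.
Proof.
  intros (Hw & Hh & Hq) Hwq Hpq Hqp. split; [auto|split].
  - rewrite <- (mmul_mid_r n (adj q)) by (apply wf_adj; auto).
    rewrite <- Hpq, <- mmul_assoc. rewrite <- Hh at 1. rewrite <- adj_mmul, Hpq, adj_mid.
    apply mmul_mid_l; auto.
  - intros v. fold (qf n q v).
    set (w := mv n q v).
    assert (Hv : forall i, (i < n)%nat -> v i = mv n p w i).
    { intros i Hi. unfold w. rewrite <- mv_mmul, Hpq, mv_mid; auto. }
    assert (Ew : forall i, mv n q v i = w i) by reflexivity. clearbody w.
    assert (E : qf n q v = Cconj (qf n p w)).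
    { rewrite (qf_mv n q v), (qf_mv n p w), Csum_conj. apply Csum_ext; intros i Hi.
      rewrite Ew, Hv by auto. Cring. }
    rewrite E. simpl. specialize (Hq w). exact Hq.
Qed.


Lemma Un_cv_ext u v l : (forall k, u k = v k) -> Un_cv u l -> Un_cv v l.
Proof. intros H Hu e He. destruct (Hu e He) as [N HN]. exists N; intros k Hk. rewrite <- H; auto. Qed.
Lemma Un_cv_const c : Un_cv (fun _ => c) c.
Proof. intros e He. exists 0%nat; intros. unfold Rdist. rewrite Rminus_diag, Rabs_R0; auto. Qed.

Lemma inv_S_le k m : (k <= m)%nat -> / INR (S m) <= / INR (S k).
Proof. intros H. apply Rinv_le_contravar. apply lt_0_INR; lia. apply le_INR; lia. Qed.

Lemma Un_cv_sub u l (phi : nat -> nat) : (forall k, (phi k < phi (S k))%nat) -> Un_cv u l -> Un_cv (fun k => u (phi k)) l.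
Proof.
  intros Hphi Hu. assert (Hge : forall k, (k <= phi k)%nat).
  { induction k. lia. specialize (Hphi k). lia. }
  intros e He. destruct (Hu e He) as [N HN]. exists N. intros k Hk. apply HN. specialize (Hge k). lia.
Qed.

Lemma Un_cv_bound u l (d : nat -> R) : (forall k, Rabs (u k - l) <= d k) -> Un_cv d 0 -> Un_cv u l.
Proof.
  intros H Hd e He. destruct (Hd e He) as [N HN]. exists N. intros k Hk. specialize (HN k Hk).
  unfold Rdist in *. rewrite Rminus_0_r in HN. specialize (H k). pose proof (Rle_abs (d k)). lra.
Qed.

Lemma Un_cv_inv_S c : Un_cv (fun k => c * / INR (S k)) 0.
Proof.
  intros e He. destruct (archimed_cor1 (e / (Rabs c + 1))) as [N [HN HN0]].
  { apply Rdiv_lt_0_compat; auto. pose proof (Rabs_pos c); lra. }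
  exists N. intros k Hk. unfold Rdist. rewrite Rminus_0_r, Rabs_mult.
  rewrite (Rabs_right (/ INR (S k))) by (left; apply Rinv_0_lt_compat, lt_0_INR; lia).
  assert (/ INR (S k) < e / (Rabs c + 1)).
  { apply Rle_lt_trans with (/ INR N); auto. apply Rinv_le_contravar. apply lt_0_INR; lia. apply le_INR; lia. }
  assert (0 <= Rabs c) by apply Rabs_pos.
  assert (Rabs c * / INR (S k) <= Rabs c * (e / (Rabs c + 1))) by (apply Rmult_le_compat_l; lra).
  assert (Rabs c * (e / (Rabs c + 1)) < e).
  { unfold Rdiv. rewrite <- Rmult_assoc. apply Rmult_lt_reg_r with (Rabs c + 1). lra.
    rewrite Rmult_assoc, Rinv_l by lra. nra. }
  lra.
Qed.

Lemma bw1 (u : nat -> R) M : (forall k, Rabs (u k) <= M) ->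
  exists psi : nat -> nat, (forall k, (psi k < psi (S k))%nat) /\ exists l, Un_cv (fun k => u (psi k)) l.
Proof.
  intros HM.
  destruct (Bolzano_Weierstrass u (fun c => -M <= c <= M)) as [l Hl].
  { apply compact_P3. }
  { intros k. specialize (HM k). unfold Rabs in HM; destruct (Rcase_abs (u k)); lra. }
  assert (Hp : forall N, exists p, (N <= p)%nat /\ Rabs (u p - l) < / INR (S N)).
  { intros N. assert (Hpos : 0 < / INR (S N)) by (apply Rinv_0_lt_compat, lt_0_INR; lia).
    destruct (Hl (disc l (mkposreal _ Hpos)) N) as [p [Hp1 Hp2]].
    { exists (mkposreal _ Hpos). intros x Hx; exact Hx. }
    exists p; split; auto. }
  set (g := fun N => proj1_sig (constructive_indefinite_description _ (Hp N))).
  assert (Hg : forall N, (N <= g N)%nat /\ Rabs (u (g N) - l) < / INR (S N)).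
  { intros N. unfold g. destruct (constructive_indefinite_description _ (Hp N)); simpl; auto. }
  clearbody g.
  set (psi := fix psi k := match k with O => g O | S k' => g (S (psi k')) end).
  assert (Hps : forall k, psi (S k) = g (S (psi k))) by reflexivity.
  assert (Hinc : forall k, (psi k < psi (S k))%nat).
  { intros k. rewrite Hps. destruct (Hg (S (psi k))). lia. }
  assert (Hge : forall k, (k <= psi k)%nat).
  { induction k. lia. specialize (Hinc k). lia. }
  assert (Hcl : forall k, Rabs (u (psi k) - l) <= / INR (S k)).
  { intros [|k]. simpl psi. destruct (Hg 0%nat); lra.
    rewrite Hps. destruct (Hg (S (psi k))) as [_ H2]. left. eapply Rlt_le_trans; [exact H2|].
    apply inv_S_le. specialize (Hge k). lia. }
  exists psi. split; auto. exists l.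
  apply Un_cv_bound with (d := fun k => 1 * / INR (S k)); [intros; rewrite Rmult_1_l; auto | apply Un_cv_inv_S].
Qed.

Lemma extract (X : Type) (L : list (X -> R)) (x : nat -> X) M :
  (forall f k, In f L -> Rabs (f (x k)) <= M) ->
  exists phi : nat -> nat, (forall k, (phi k < phi (S k))%nat) /\
    forall f, In f L -> exists l, Un_cv (fun k => f (x (phi k))) l.
Proof.
  induction L as [|f L IH]; intros HB.
  - exists (fun k => k). split; [intros; lia | intros f []].
  - destruct IH as [phi [Hphi Hcv]]. { intros; apply HB; simpl; auto. }
    destruct (bw1 (fun k => f (x (phi k))) M) as [psi [Hpsi [l Hl]]]. { intros; apply HB; simpl; auto. }
    exists (fun k => phi (psi k)). split.
    + intros k. assert (Hmono : forall a b, (a < b)%nat -> (phi a < phi b)%nat).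
      { intros a b Hab. induction Hab. apply Hphi. specialize (Hphi m). lia. }
      apply Hmono, Hpsi.
    + intros g [<-|Hg]. exists l; auto.
      destruct (Hcv g Hg) as [l' Hl']. exists l'. apply (Un_cv_sub (fun k => g (x (phi k)))); auto.
Qed.

Lemma closed_lin (X : Type) (add : X -> X -> X) (sc : R -> X -> X) (L : list (X -> R)) :
  (forall f, In f L -> (forall a b, f (add a b) = f a + f b) /\ (forall r a, f (sc r a) = r * f a)) ->
  forall (V : X -> Prop) (x : nat -> X),
  (forall a b, V a -> V b -> V (add a b)) -> (forall r a, V a -> V (sc r a)) ->
  (forall k, V (x k)) -> (forall f, In f L -> exists l, Un_cv (fun k => f (x k)) l) ->
  exists y, V y /\ forall f, In f L -> Un_cv (fun k => f (x k)) (f y).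
Proof.
  induction L as [|f L IH]; intros Hlin V x Hadd Hsc Hx Hcv.
  - exists (x 0%nat). split; auto. intros f [].
  - assert (HlinL : forall g, In g L -> (forall a b, g (add a b) = g a + g b) /\ (forall r a, g (sc r a) = r * g a))
      by (intros; apply Hlin; simpl; auto).
    destruct (Hlin f (or_introl eq_refl)) as [Hfa Hfs].
    destruct (classic (exists u, V u /\ f u <> 0)) as [[u [Hu Hfu]]|Hno].
    + set (u' := sc (/ f u) u).
      assert (Hu' : V u') by (apply Hsc; auto).
      assert (Hfu' : f u' = 1) by (unfold u'; rewrite Hfs; field; auto).
      destruct (Hcv f (or_introl eq_refl)) as [lf Hlf].
      set (w := fun k => add (x k) (sc (- f (x k)) u')).
      destruct (IH HlinL (fun z => V z /\ f z = 0) w) as [yw [[Hyw Hfyw] Hycv]].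
      * intros a b [Ha Ha0] [Hb Hb0]. split; auto. rewrite Hfa; lra.
      * intros r a [Ha Ha0]. split; auto. rewrite Hfs; rewrite Ha0; ring.
      * intros k; unfold w; split. apply Hadd; auto. rewrite Hfa, Hfs, Hfu'. ring.
      * intros g Hg. destruct (Hcv g (or_intror Hg)) as [lg Hlg]. exists (lg + - lf * g u').
        destruct (HlinL g Hg) as [Hga Hgs].
        apply Un_cv_ext with (fun k => g (x k) + - f (x k) * g u').
        { intros k; unfold w; rewrite Hga, Hgs; ring. }
        apply CV_plus; auto. apply CV_mult. apply CV_opp; auto. apply Un_cv_const.
      * exists (add yw (sc lf u')). split. apply Hadd; auto.
        intros g [<-|Hg].
        { rewrite Hfa, Hfs, Hfyw, Hfu'. replace (0 + lf * 1) with lf by ring. auto. }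
        destruct (HlinL g Hg) as [Hga Hgs]. rewrite Hga, Hgs.
        apply Un_cv_ext with (fun k => g (w k) + f (x k) * g u').
        { intros k; unfold w. rewrite Hga, Hgs. ring. }
        apply CV_plus; auto. apply CV_mult; auto. apply Un_cv_const.
    + assert (Hf0 : forall z, V z -> f z = 0).
      { intros z Hz. destruct (Req_dec (f z) 0); auto. exfalso; apply Hno; eauto. }
      destruct (IH HlinL V x Hadd Hsc Hx) as [y [Hy Hycv]]. { intros; apply Hcv; simpl; auto. }
      exists y. split; auto. intros g [<-|Hg]; auto.
      rewrite (Hf0 y Hy). apply Un_cv_ext with (fun _ => 0). intros; rewrite Hf0; auto. apply Un_cv_const.
Qed.


Definition Ccv (u : nat -> C) (z : C) := Un_cv (fun k => re (u k)) (re z) /\ Un_cv (fun k => im (u k)) (im z).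

Lemma Ccv_add u v z w : Ccv u z -> Ccv v w -> Ccv (fun k => Cadd (u k) (v k)) (Cadd z w).
Proof. intros [H1 H2] [H3 H4]; split; simpl; apply CV_plus; auto. Qed.
Lemma Ccv_mul u v z w : Ccv u z -> Ccv v w -> Ccv (fun k => Cmul (u k) (v k)) (Cmul z w).
Proof. intros [H1 H2] [H3 H4]; split; simpl.
  apply CV_minus; apply CV_mult; auto. apply CV_plus; apply CV_mult; auto. Qed.
Lemma Ccv_conj u z : Ccv u z -> Ccv (fun k => Cconj (u k)) (Cconj z).
Proof. intros [H1 H2]; split; simpl; auto. apply CV_opp; auto. Qed.
Lemma Ccv_Csum n (f : nat -> nat -> C) (z : nat -> C) :
  (forall i, (i < n)%nat -> Ccv (fun k => f k i) (z i)) -> Ccv (fun k => Csum n (f k)) (Csum n z).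
Proof.
  induction n; intros H; simpl.
  - split; apply Un_cv_const.
  - apply Ccv_add. apply IHn; intros; apply H; lia. apply H; lia.
Qed.

Definition n1 (z : C) := Rabs (re z) + Rabs (im z).
Definition nm n (A : Mat) := Rsum n (fun i => Rsum n (fun j => n1 (A i j))).

Lemma n1_pos z : 0 <= n1 z.
Proof. unfold n1; pose proof (Rabs_pos (re z)); pose proof (Rabs_pos (im z)); lra. Qed.
Lemma n1_add z w : n1 (Cadd z w) <= n1 z + n1 w.
Proof. unfold n1; simpl. pose proof (Rabs_triang (re z) (re w)); pose proof (Rabs_triang (im z) (im w)); lra. Qed.
Lemma n1_opp z : n1 (Copp z) = n1 z.
Proof. unfold n1; simpl. rewrite !Rabs_Ropp; auto. Qed.
Lemma n1_mul z w : n1 (Cmul z w) <= n1 z * n1 w.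
Proof.
  unfold n1; simpl.
  pose proof (Rabs_triang (re z * re w) (- (im z * im w))).
  pose proof (Rabs_triang (re z * im w) (im z * re w)).
  rewrite Rabs_Ropp, !Rabs_mult in *.
  pose proof (Rabs_pos (re z)); pose proof (Rabs_pos (im z)); pose proof (Rabs_pos (re w)); pose proof (Rabs_pos (im w)).
  unfold Rminus. nra.
Qed.
Lemma n1_Csum n f : n1 (Csum n f) <= Rsum n (fun k => n1 (f k)).
Proof. induction n; simpl. unfold n1; simpl; rewrite Rabs_R0; lra.
  pose proof (n1_add (Csum n f) (f n)); lra. Qed.
Lemma re_le_n1 z : Rabs (re z) <= n1 z.
Proof. unfold n1; pose proof (Rabs_pos (im z)); lra. Qed.
Lemma im_le_n1 z : Rabs (im z) <= n1 z.
Proof. unfold n1; pose proof (Rabs_pos (re z)); lra. Qed.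

Lemma nm_pos n A : 0 <= nm n A.
Proof. apply Rsum_nonneg; intros; apply Rsum_nonneg; intros; apply n1_pos. Qed.
Lemma nm_entry n A i j : (i < n)%nat -> (j < n)%nat -> n1 (A i j) <= nm n A.
Proof.
  intros Hi Hj. unfold nm.
  apply Rle_trans with (Rsum n (fun j => n1 (A i j))).
  apply (Rsum_term n (fun j => n1 (A i j))); auto; intros; apply n1_pos.
  apply (Rsum_term n (fun i => Rsum n (fun j => n1 (A i j)))); auto.
  intros; apply Rsum_nonneg; intros; apply n1_pos.
Qed.
Lemma nm_mmul n A B : nm n (mmul n A B) <= nm n A * nm n B.
Proof.
  unfold nm at 1.
  apply Rle_trans with (Rsum n (fun i => Rsum n (fun j => Rsum n (fun k => n1 (A i k) * n1 (B k j))))).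
  { apply Rsum_le; intros i Hi; apply Rsum_le; intros j Hj. rewrite mmul_in by auto.
    eapply Rle_trans; [apply n1_Csum|]. apply Rsum_le; intros; apply n1_mul. }
  apply Rle_trans with (Rsum n (fun i => Rsum n (fun k => n1 (A i k) * nm n B))).
  { apply Rsum_le; intros i Hi. rewrite Rsum_swap. apply Rsum_le; intros k Hk.
    rewrite <- Rsum_mul_l. apply Rmult_le_compat_l. apply n1_pos.
    apply (Rsum_term n (fun k => Rsum n (fun j => n1 (B k j)))); auto.
    intros; apply Rsum_nonneg; intros; apply n1_pos. }
  right. change (nm n A) with (Rsum n (fun i => Rsum n (fun j => n1 (A i j)))).
  rewrite Rmult_comm, Rsum_mul_l. apply Rsum_ext; intros i Hi.
  rewrite Rsum_mul_l. apply Rsum_ext; intros; ring.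
Qed.
Lemma nm_small n A d : (forall i j, (i < n)%nat -> (j < n)%nat -> n1 (A i j) <= d) -> nm n A <= INR n * (INR n * d).
Proof.
  intros H. unfold nm. rewrite <- !Rsum_const. apply Rsum_le; intros i Hi.
  rewrite Rsum_const. rewrite <- Rsum_const. apply Rsum_le; intros; auto.
Qed.


Definition Lf n : list (Mat -> R) :=
  flat_map (fun i => flat_map (fun j => (fun x : Mat => re (x i j)) :: (fun x : Mat => im (x i j)) :: nil) (seq 0 n)) (seq 0 n).

Lemma Lf_char n f : In f (Lf n) -> exists i j, (i < n)%nat /\ (j < n)%nat /\
  (f = (fun x : Mat => re (x i j)) \/ f = (fun x : Mat => im (x i j))).
Proof.
  unfold Lf. rewrite in_flat_map. intros [i [Hi Hf]]. rewrite in_flat_map in Hf. destruct Hf as [j [Hj Hf]].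
  apply in_seq in Hi; apply in_seq in Hj.
  exists i, j. split; [lia|split;[lia|]]. destruct Hf as [<-|[<-|[]]]; auto.
Qed.
Lemma Lf_re n i j : (i < n)%nat -> (j < n)%nat -> In (fun x : Mat => re (x i j)) (Lf n).
Proof. intros. unfold Lf. rewrite in_flat_map. exists i. split. apply in_seq; lia.
  rewrite in_flat_map. exists j. split. apply in_seq; lia. simpl; auto. Qed.
Lemma Lf_im n i j : (i < n)%nat -> (j < n)%nat -> In (fun x : Mat => im (x i j)) (Lf n).
Proof. intros. unfold Lf. rewrite in_flat_map. exists i. split. apply in_seq; lia.
  rewrite in_flat_map. exists j. split. apply in_seq; lia. simpl; auto. Qed.

Lemma abs_of_sq x T : 0 <= T -> x * x <= T -> Rabs x <= T + 1.
Proof. intros HT H. unfold Rabs; destruct (Rcase_abs x); nra. Qed.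

Lemma limit_factor n (V : Mat -> Prop) (b : Mat) :
  (forall x, V x -> wf n x) -> (forall x y, V x -> V y -> V (madd x y)) ->
  (forall r x, V x -> V (mscal (mkC r 0) x)) -> wf n b ->
  (forall k : nat, exists g, V g /\ forall i j, (i < n)%nat -> (j < n)%nat ->
      n1 (msub (mmul n (adj g) g) b i j) <= 2 * / INR (S k)) ->
  exists y, V y /\ b = mmul n (adj y) y.
Proof.
  intros HVwf Hadd Hsc Hb Hg.
  set (G := fun k => proj1_sig (constructive_indefinite_description _ (Hg k))).
  assert (HG : forall k, V (G k) /\ forall i j, (i < n)%nat -> (j < n)%nat ->
      n1 (msub (mmul n (adj (G k)) (G k)) b i j) <= 2 * / INR (S k)).
  { intros k. unfold G. destruct (constructive_indefinite_description _ (Hg k)); simpl; auto. }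
  clearbody G.
  set (T := Rsum n (fun j => n1 (b j j) + 2)).
  assert (HT0 : 0 <= T) by (apply Rsum_nonneg; intros; pose proof (n1_pos (b k k)); lra).
  assert (Hbd : forall k i j, (i < n)%nat -> (j < n)%nat -> Cnorm2 (G k i j) <= T).
  { intros k i j Hi Hj. destruct (HG k) as [_ Hk].
    specialize (Hk j j Hj Hj).
    assert (E : re (mmul n (adj (G k)) (G k) j j) = Rsum n (fun l => Cnorm2 (G k l j))).
    { rewrite mmul_in by auto. rewrite re_Csum. apply Rsum_ext; intros; unfold adj, Cnorm2; simpl; ring. }
    assert (Cnorm2 (G k i j) <= Rsum n (fun l => Cnorm2 (G k l j))).
    { apply (Rsum_term n (fun l => Cnorm2 (G k l j))); auto. intros; unfold Cnorm2; nra. }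
    assert (re (mmul n (adj (G k)) (G k) j j) <= n1 (b j j) + 2).
    { pose proof (re_le_n1 (msub (mmul n (adj (G k)) (G k)) b j j)).
      pose proof (re_le_n1 (b j j)).
      assert (Er : re (msub (mmul n (adj (G k)) (G k)) b j j) = re (mmul n (adj (G k)) (G k) j j) - re (b j j))
        by (unfold msub; simpl; ring). rewrite Er in H0.
      assert (2 * / INR (S k) <= 2).
      { assert (/ INR (S k) <= 1). { rewrite <- Rinv_1. apply Rinv_le_contravar. lra.
          rewrite S_INR. pose proof (pos_INR k); lra. } lra. }
      pose proof (Rle_abs (re (mmul n (adj (G k)) (G k) j j) - re (b j j))).
      pose proof (Rle_abs (re (b j j))). lra. }
    assert (n1 (b j j) + 2 <= T).
    { apply (Rsum_term n (fun j => n1 (b j j) + 2)); auto. intros; pose proof (n1_pos (b k0 k0)); lra. }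
    lra. }
  assert (HLin : forall f, In f (Lf n) -> (forall a c, f (madd a c) = f a + f c) /\
                   (forall r a, f (mscal (mkC r 0) a) = r * f a)).
  { intros f Hf. destruct (Lf_char n f Hf) as [i [j [_ [_ [-> | ->]]]]]; split; intros; simpl; ring. }
  destruct (extract Mat (Lf n) G (T + 1)) as [phi [Hphi Hcv]].
  { intros f k Hf. destruct (Lf_char n f Hf) as [i [j [Hi [Hj [-> | ->]]]]];
      apply abs_of_sq; auto; pose proof (Hbd k i j Hi Hj); unfold Cnorm2 in *; nra. }
  destruct (closed_lin Mat madd (fun r a => mscal (mkC r 0) a) (Lf n) HLin V (fun k => G (phi k)) Hadd Hsc)
    as [y [Hy Hycv]].
  { intros; apply HG. }
  { exact Hcv. }
  exists y. split; auto.
  assert (Hge : forall k, (k <= phi k)%nat).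
  { induction k. lia. specialize (Hphi k). lia. }
  apply functional_extensionality; intro i; apply functional_extensionality; intro j.
  destruct (Nat.lt_ge_cases i n) as [Hi|Hi]; [destruct (Nat.lt_ge_cases j n) as [Hj|Hj]|].
  2,3: rewrite Hb, mmul_out; auto.
  assert (C1' : Ccv (fun k => Csum n (fun l => Cmul (Cconj (G (phi k) l i)) (G (phi k) l j)))
                   (Csum n (fun l => Cmul (Cconj (y l i)) (y l j)))).
  { apply Ccv_Csum; intros l Hl. apply Ccv_mul. apply Ccv_conj.
    split; [exact (Hycv _ (Lf_re n l i Hl Hi)) | exact (Hycv _ (Lf_im n l i Hl Hi))].
    split; [exact (Hycv _ (Lf_re n l j Hl Hj)) | exact (Hycv _ (Lf_im n l j Hl Hj))]. }
  assert (Hcl : forall k, n1 (Cadd (Csum n (fun l => Cmul (Cconj (G (phi k) l i)) (G (phi k) l j))) (Copp (b i j)))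
                  <= 2 * / INR (S k)).
  { intros k. destruct (HG (phi k)) as [_ Hk]. specialize (Hk i j Hi Hj).
    unfold msub in Hk. rewrite mmul_in in Hk by auto. unfold adj in Hk.
    eapply Rle_trans; [exact Hk|]. apply Rmult_le_compat_l. lra. apply inv_S_le; auto. }
  assert (C2 : Ccv (fun k => Csum n (fun l => Cmul (Cconj (G (phi k) l i)) (G (phi k) l j))) (b i j)).
  { split.
    - apply Un_cv_bound with (d := fun k => 2 * / INR (S k)); [|apply Un_cv_inv_S].
      intros k. eapply Rle_trans; [|apply (Hcl k)]. apply (re_le_n1 (Cadd _ (Copp (b i j)))).
    - apply Un_cv_bound with (d := fun k => 2 * / INR (S k)); [|apply Un_cv_inv_S].
      intros k. eapply Rle_trans; [|apply (Hcl k)]. apply (im_le_n1 (Cadd _ (Copp (b i j)))). }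
  rewrite mmul_in by auto. destruct C1' as [Ra Ia]. destruct C2 as [Rb Ib].
  apply Ceq.
  - exact (UL_sequence _ _ _ Rb Ra).
  - exact (UL_sequence _ _ _ Ib Ia).
Qed.


Lemma frob_entry n A i j : (i < n)%nat -> (j < n)%nat -> Cnorm2 (A i j) <= frob2 n A.
Proof.
  intros Hi Hj. unfold frob2.
  assert (Hnn : forall i j, 0 <= Cnorm2 (A i j)) by (intros; unfold Cnorm2; nra).
  apply Rle_trans with (Rsum n (fun j => Cnorm2 (A i j))).
  apply (Rsum_term n (fun j => Cnorm2 (A i j))); auto.
  apply (Rsum_term n (fun i => Rsum n (fun j => Cnorm2 (A i j)))); auto.
  intros; apply Rsum_nonneg; auto.
Qed.

Lemma n1_of_small z d : 0 < d -> Cnorm2 z < d * d / 4 -> n1 z <= d.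
Proof.
  intros Hd H. unfold n1, Cnorm2 in *.
  assert (Rabs (re z) <= d / 2). { unfold Rabs; destruct (Rcase_abs (re z)); nra. }
  assert (Rabs (im z) <= d / 2). { unfold Rabs; destruct (Rcase_abs (im z)); nra. }
  lra.
Qed.

Lemma n1_shift n X b e i j : 0 <= e -> (i < n)%nat -> (j < n)%nat ->
  n1 (msub X b i j) <= n1 (msub X (shift n b e) i j) + e.
Proof.
  intros He Hi Hj.
  replace (msub X b i j) with (Cadd (msub X (shift n b e) i j) (Cmul (mkC e 0) (mid n i j)))
    by (unfold msub, shift, madd, mscal; Cring).
  eapply Rle_trans; [apply n1_add|]. apply Rplus_le_compat_l.
  eapply Rle_trans; [apply n1_mul|].
  assert (n1 (mkC e 0) = e) by (unfold n1; simpl; rewrite Rabs_R0, Rabs_right; lra).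
  assert (n1 (mid n i j) <= 1).
  { rewrite mid_in by auto. destruct (Nat.eqb i j); unfold n1; simpl; rewrite ?Rabs_R0, ?Rabs_R1; lra. }
  rewrite H. nra.
Qed.

Lemma shift_pinv n b e : psd n b -> 0 < e ->
  positive_invertible n (shift n b e) /\ exists q, wf n q /\ mmul n (shift n b e) q = mid n /\ mmul n q (shift n b e) = mid n.
Proof.
  intros Hb He.
  destruct (LinAlg.inj_invertible' n (shift n b e)) as [q [Hq1 [Hq2 Hq3]]].
  { apply wf_shift, Hb. }
  { intros v Hv. apply (shift_inj n b e Hb He). exact Hv. }
  split. split. apply psd_shift; auto; lra.
  split. apply wf_shift, Hb. exists q; auto.
  exists q; auto.
Qed.

Lemma eps_pos k : 0 < / INR (S k).
Proof. apply Rinv_0_lt_compat, lt_0_INR; lia. Qed.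
Lemma eps_le1 k : / INR (S k) <= 1.
Proof. rewrite <- Rinv_1. apply Rinv_le_contravar. lra. rewrite S_INR. pose proof (pos_INR k); lra. Qed.

Lemma nm_le_add n A B D : (forall i j, (i < n)%nat -> (j < n)%nat -> n1 (A i j) <= n1 (B i j) + n1 (D i j)) ->
  nm n A <= nm n B + nm n D.
Proof.
  intros H. unfold nm. rewrite <- Rsum_add. apply Rsum_le; intros i Hi.
  rewrite <- Rsum_add. apply Rsum_le; intros j Hj. auto.
Qed.

Lemma num_facts P e : 0 <= P -> 0 < e <= 1 ->
  P * (e / (2 * ((P + 1) * (P + 1)))) <= 1 / 2 /\ 2 * P * P * (e / (2 * ((P + 1) * (P + 1)))) <= e
  /\ 0 < e / (2 * ((P + 1) * (P + 1))).
Proof.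
  intros HP He. set (Q := 2 * ((P + 1) * (P + 1))). assert (Hq : 0 < Q) by (unfold Q; nra).
  set (h := e / Q). assert (Hh : h * Q = e) by (unfold h; field; lra).
  assert (Hh0 : 0 < h) by (unfold h; apply Rdiv_lt_0_compat; lra).
  split; [|split]; auto.
  - apply Rmult_le_reg_r with Q; auto. replace (P * h * Q) with (P * e) by (rewrite <- Hh; ring).
    unfold Q; nra.
  - apply Rmult_le_reg_r with Q; auto. replace (2 * P * P * h * Q) with (2 * P * P * e) by (rewrite <- Hh; ring).
    unfold Q; nra.
Qed.


Theorem mainTheorem1 (n : nat) (S : Mat -> Prop) :
  unital_subalgebra n S -> logmodular n S ->
  forall b : Mat, psd n b ->
  exists a c : Mat, S a /\ S c /\ b = mmul n (adj a) a /\ b = mmul n c (adj c).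
Proof.
  intros [HSwf [HSid [HSadd [HSsc HSmul]]]] Hlog b Hb.
  assert (Hbw : wf n b) by apply Hb.
  destruct (limit_factor n S b HSwf HSadd (fun r x Hx => HSsc (mkC r 0) x Hx) Hbw) as [a [Ha Hab]].
  { intros k. set (e := / INR (Datatypes.S k)). assert (He : 0 < e) by apply eps_pos.
    destruct (shift_pinv n b e Hb He) as [Hp _].
    destruct (Hlog _ Hp (e * e / 4)) as [g [[Hg _] Hfr]]. { apply Rdiv_lt_0_compat; nra. }
    exists g. split; auto. intros i j Hi Hj.
    eapply Rle_trans; [apply (n1_shift n _ b e); auto; lra|].
    assert (n1 (msub (mmul n (adj g) g) (shift n b e) i j) <= e).
    { apply n1_of_small; auto. eapply Rle_lt_trans; [apply (frob_entry n); auto| exact Hfr]. }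
    lra. }
  set (V := fun z => S (adj z)).
  destruct (limit_factor n V b) as [y [Hy Hyb]].
  { intros x Hx. rewrite <- (adj_adj x). apply wf_adj. apply HSwf. exact Hx. }
  { intros x z Hx Hz. unfold V. rewrite adj_madd. apply HSadd; auto. }
  { intros r x Hx. unfold V. rewrite adj_mscal_r. apply HSsc; auto. }
  { exact Hbw. }
  { intros k. set (e := / INR (Datatypes.S k)). assert (He : 0 < e) by apply eps_pos.
    assert (He1 : e <= 1) by apply eps_le1.
    set (p := shift n b e).
    destruct (shift_pinv n b e Hb He) as [Hp [q [Hqw [Hpq Hqp]]]]. fold p in Hp, Hpq, Hqp.
    assert (Hpw : wf n p) by apply Hp.
    assert (Hq : positive_invertible n q).
    { split. apply (inverse_psd n p q); auto. apply Hp.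
      split; auto. exists p; auto. }
    set (P := nm n p). assert (HP : 0 <= P) by apply nm_pos.
    destruct (num_facts P e HP (conj He He1)) as [F1 [F2 F3]].
    set (eta := e / (2 * ((P + 1) * (P + 1)))) in *.
    set (dl := eta / (INR n * INR n + 1)).
    assert (Hdl : 0 < dl) by (unfold dl; apply Rdiv_lt_0_compat; auto; pose proof (pos_INR n); nra).
    destruct (Hlog _ Hq (dl * dl / 4)) as [a' [[Ha' [d [Hd [Had Hda]]]] Hfr]]. { apply Rdiv_lt_0_compat; nra. }
    exists (adj d). split. { unfold V. rewrite adj_adj. exact Hd. }
    set (G := mmul n (adj a') a').
    set (X := mmul n d (adj d)).
    assert (Haw : wf n a') by auto. assert (Hdw : wf n d) by auto.
    assert (HGX : mmul n G X = mid n).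
    { unfold G, X. rewrite mmul_assoc. rewrite <- (mmul_assoc n a' d). rewrite Had.
      rewrite mmul_mid_l by (apply wf_adj; auto). rewrite <- adj_mmul, Hda. apply adj_mid. }
    set (E := msub G q).
    assert (HGE : G = madd q E).
    { unfold E. apply functional_extensionality; intro; apply functional_extensionality; intro.
      unfold madd, msub. Cring. }
    set (Y := mmul n (mmul n p E) X).
    assert (HpXY : p = madd X Y).
    { rewrite <- (mmul_mid_r n p Hpw). rewrite <- HGX at 1. rewrite <- mmul_assoc.
      rewrite HGE, mmul_madd_r, Hpq, mmul_madd_l, mmul_mid_l by apply wf_mmul. reflexivity. }
    assert (HXent : forall i j, msub X p i j = Copp (Y i j)).
    { intros i j. rewrite HpXY. unfold msub, madd. Cring. }
    assert (HE : nm n E <= eta).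
    { eapply Rle_trans. apply (nm_small n E dl). intros i j Hi Hj. apply n1_of_small; auto.
      eapply Rle_lt_trans; [apply (frob_entry n); auto| exact Hfr].
      unfold dl. pose proof (pos_INR n). 
      assert (Hx : INR n * (INR n * (eta / (INR n * INR n + 1))) = eta * (INR n * INR n / (INR n * INR n + 1)))
        by (field; nra). rewrite Hx.
      assert (INR n * INR n / (INR n * INR n + 1) <= 1).
      { apply Rmult_le_reg_r with (INR n * INR n + 1). nra. unfold Rdiv. rewrite Rmult_assoc, Rinv_l by nra. nra. }
      assert (0 < eta) by auto. nra. }
    assert (HY : nm n Y <= P * nm n E * nm n X).
    { unfold Y. eapply Rle_trans; [apply nm_mmul|]. apply Rmult_le_compat_r. apply nm_pos. apply nm_mmul. }
    assert (HX : nm n X <= P + nm n Y).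
    { apply nm_le_add. intros i j Hi Hj.
      replace (X i j) with (Cadd (p i j) (Copp (Y i j))) by (rewrite HpXY; unfold madd; Cring).
      rewrite <- (n1_opp (Y i j)). apply n1_add. }
    assert (HEP : P * nm n E <= 1 / 2).
    { eapply Rle_trans; [|exact F1]. apply Rmult_le_compat_l; auto. }
    pose proof (nm_pos n X) as HX0. pose proof (nm_pos n E) as HE0.
    assert (HY2 : nm n Y <= 1 / 2 * nm n X) by nra.
    assert (HX2 : nm n X <= 2 * P) by lra.
    assert (HY3 : nm n Y <= e).
    { eapply Rle_trans; [exact HY|]. eapply Rle_trans; [|exact F2].
      assert (H1 : P * nm n E <= P * eta) by (apply Rmult_le_compat_l; auto).
      assert (H2 : P * nm n E * nm n X <= P * eta * nm n X) by (apply Rmult_le_compat_r; auto).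
      assert (H3 : P * eta * nm n X <= P * eta * (2 * P)) by (apply Rmult_le_compat_l; nra).
      lra. }
    intros i j Hi Hj. rewrite adj_adj. fold X.
    eapply Rle_trans; [apply (n1_shift n X b e); auto; lra|]. fold p.
    rewrite HXent, n1_opp.
    assert (n1 (Y i j) <= nm n Y) by (apply nm_entry; auto). lra. }
  exists a, (adj y). split; [exact Ha|split; [exact Hy|split; [exact Hab|]]].
  rewrite adj_adj. exact Hyb.
Qed.
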